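(* Let $\mathcal{M}=(\Sigma,\Gamma,\mathcal{H},U,M)$ be a real QMM (all matrices $U_\sigma$ and $M_\gamma$ have real entries with respect to a fixed basis), let $n=\dim\mathcal{H}$, and let $\rho_s,\rho_t$ be density operators on $\mathcal{H}$ (not necessarily real). Then for every $k\in\mathbb{N}$, $\rho_s\sim_k\rho_t\iff\rho_s\sim_k^{\frac12 n(n+1)-1}\rho_t$, and $\rho_s\sim\rho_t\iff\rho_s\sim^{\frac12 n(n+1)-1}\rho_t$.
   Context: A quantum Mealy machine (QMM) is a tuple $\mathcal{M}=(\Sigma,\Gamma,\mathcal{H},U,M)$ where $\Sigma,\Gamma$ are finite alphabets, $\mathcal{H}$ a finite-dimensional complex Hilbert space, $U=\{U_\sigma\}_{\sigma\in\Sigma}$ unitary operators on $\mathcal{H}$, $M=\{M_\gamma\}_{\gamma\in\Gamma}$ linear operators with $\sum_\gamma M_\gamma^\dagger M_\gamma=I$. For a word $a$, $|a|$ is its length, $a[l:r]=a[l]\cdots a[r]$ (empty if $l>r$), $U_a=U_{a[|a|]}\cdots U_{a[1]}$, $U_\epsilon=I$. A scheduler for $a\in\Sigma^*$ is a finite non-decreasing integer sequence $\mathcal{S}=(s_1\le\dots\le s_{|\mathcal{S}|})$ in $\{0,\dots,|a|\}$ (possibly empty). With $s_0=0$, $s_{|\mathcal{S}|+1}=|a|$, $a_i=a[s_{i-1}+1:s_i]$. For $b\in\Gamma^{|\mathcal{S}|}$, $V_{b|a,\mathcal{S}}=U_{a_{|\mathcal{S}|+1}}M_{b_{|\mathcal{S}|}}U_{a_{|\mathcal{S}|}}\cdots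 M_{b_1}U_{a_1}$ and $\Pr^{\mathcal{M}}_\rho(b|a,\mathcal{S})=\operatorname{tr}(V_{b|a,\mathcal{S}}\rho V_{b|a,\mathcal{S}}^\dagger)$. $\rho_s\sim\rho_t$ means $\Pr_{\rho_s}^{\mathcal{M}}(b|a,\mathcal{S})=\Pr_{\rho_t}^{\mathcal{M}}(b|a,\mathcal{S})$ for all $a,\mathcal{S},b$; $\sim_k$ restricts to $|\mathcal{S}|\le k$; $\sim^m$ restricts to $|a|+|\mathcal{S}|\le m$; $\sim^m_k$ restricts to both $|\mathcal{S}|\le k$ and $|a|+|\mathcal{S}|\le m$. *)

(* Defs.v *)
(* Complex scalars: an arbitrary numClosedFieldType C
   (e.g. algC); the Hilbert space H is C^n with its standard basis. *)
From HB Require Import structures.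
From mathcomp Require Import all_boot all_order all_algebra.
Set Implicit Arguments. Unset Strict Implicit. Unset Printing Implicit Defensive.
Import Order.TTheory GRing.Theory Num.Theory.
Local Open Scope ring_scope.

Section QMM.
Variable C : numClosedFieldType.
Variable n : nat.

Definition adj (p q : nat) (A : 'M[C]_(p, q)) : 'M[C]_(q, p) :=
  (map_mx Num.conj A)^T.

Definition unitary (A : 'M[C]_n) : Prop :=
  A *m adj A = 1%:M /\ adj A *m A = 1%:M.

Definition real_mx (A : 'M[C]_n) : Prop := forall i j, A i j \is Num.real.

Definition density (rho : 'M[C]_n) : Prop :=
  [/\ adj rho = rho,
      (forall v : 'cV[C]_n, 0 <= (adj v *m rho *m v) 0 0)
    & \tr rho = 1].

Variables (Sigma Gamma : finType).
Variable U : Sigma -> 'M[C]_n.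
Variable M : Gamma -> 'M[C]_n.

Definition QMM : Prop :=
  (forall s, unitary (U s)) /\ \sum_(g : Gamma) adj (M g) *m M g = 1%:M.

Definition real_QMM : Prop :=
  QMM /\ (forall s, real_mx (U s)) /\ (forall g, real_mx (M g)).

(* U_w = U_{w[|w|]} ... U_{w[1]}, U_eps = I *)
Definition Uword (w : seq Sigma) : 'M[C]_n :=
  foldl (fun acc s => U s *m acc) 1%:M w.

(* a[l:r] with 1-based l, r; here the segment a[p+1 : q] *)
Definition segment (a : seq Sigma) (p q : nat) : seq Sigma :=
  drop p (take q a).

Definition scheduler (a : seq Sigma) (S : seq nat) : bool :=
  sorted leq S && all (fun s => s <= size a)%N S.

(* V_{b|a,S} = U_{a_{|S|+1}} M_{b_|S|} U_{a_|S|} ... M_{b_1} U_{a_1} *)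
Fixpoint Vaux (a : seq Sigma) (prev : nat) (S : seq nat) (b : seq Gamma)
  : 'M[C]_n :=
  match S, b with
  | s :: S', g :: b' => Vaux a s S' b' *m (M g *m Uword (segment a prev s))
  | _, _ => Uword (drop prev a)
  end.

Definition Vmat (b : seq Gamma) (a : seq Sigma) (S : seq nat) : 'M[C]_n :=
  Vaux a 0 S b.

Definition Pr (rho : 'M[C]_n) (b : seq Gamma) (a : seq Sigma) (S : seq nat)
  : C := \tr (Vmat b a S *m rho *m adj (Vmat b a S)).

Definition equiv_restr (P : nat -> nat -> bool) (rs rt : 'M[C]_n) : Prop :=
  forall (a : seq Sigma) (S : seq nat) (b : seq Gamma),
    scheduler a S -> size b = size S -> P (size S) (size a + size S)%N ->
    Pr rs b a S = Pr rt b a S.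

Definition qequiv := equiv_restr (fun _ _ => true).
Definition qequiv_k (k : nat) := equiv_restr (fun l _ => l <= k)%N.
Definition qequiv_m (m : nat) := equiv_restr (fun _ t => t <= m)%N.
Definition qequiv_km (k m : nat) :=
  equiv_restr (fun l t => (l <= k) && (t <= m))%N.

End QMM.

(* Main.v *)
Require Import Defs.
From HB Require Import structures.
From mathcomp Require Import all_boot all_order all_algebra.
Import Order.TTheory GRing.Theory Num.Theory.
Local Open Scope ring_scope.

Set Implicit Arguments. Unset Strict Implicit. Unset Printing Implicit Defensive.
Section Words.
Variable C : numClosedFieldType.
Variable n : nat.
Variables (Sigma Gamma : finType).
Variable U : Sigma -> 'M[C]_n.
Variable M : Gamma -> 'M[C]_n.

Definition Op (o : Sigma + Gamma) : 'M[C]_n :=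
  match o with inl s => U s | inr g => M g end.

Definition Vop (w : seq (Sigma + Gamma)) : 'M[C]_n :=
  foldl (fun acc o => Op o *m acc) 1%:M w.

Lemma foldl_Vop w (A : 'M[C]_n) :
  foldl (fun acc o => Op o *m acc) A w = Vop w *m A.
Proof.
rewrite /Vop; elim: w A => [|o w IH] A /=; first by rewrite mul1mx.
by rewrite IH [in RHS]IH mulmx1 mulmxA.
Qed.

Lemma Vop_cons o w : Vop (o :: w) = Vop w *m Op o.
Proof. by rewrite {1}/Vop /= foldl_Vop mulmx1. Qed.

Lemma Vop_cat w1 w2 : Vop (w1 ++ w2) = Vop w2 *m Vop w1.
Proof. by rewrite {1}/Vop foldl_cat foldl_Vop. Qed.

Lemma Uword_Vop a : Uword U a = Vop (map inl a).
Proof.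
rewrite /Uword /Vop; elim: a (1%:M : 'M[C]_n) => [|s a IH] A //=.
Qed.

Definition isr (o : Sigma + Gamma) : bool := if o is inr _ then true else false.

Fixpoint word (a : seq Sigma) (prev : nat) (S : seq nat) (b : seq Gamma)
  : seq (Sigma + Gamma) :=
  match S, b with
  | s :: S', g :: b' => map inl (segment a prev s) ++ inr g :: word a s S' b'
  | _, _ => map inl (drop prev a)
  end.

Lemma Vaux_word a prev S b : Vaux U M a prev S b = Vop (word a prev S b).
Proof.
elim: S prev b => [|s S IH] prev [|g b] //=; rewrite ?Uword_Vop //.
by rewrite Vop_cat Vop_cons IH mulmxA.
Qed.

Lemma count_word a prev S b : (count isr (word a prev S b) <= size S)%N.
Proof.
elim: S prev b => [|s S IH] prev [|g b] /=;
  rewrite ?count_map ?count_pred0 //; try by rewrite (eq_count (a2:=pred0)) ?count_pred0.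
rewrite count_cat count_map.
have -> : count (preim inl isr) (segment a prev s) = 0%N.
  by rewrite (@eq_count _ _ pred0) ?count_pred0.
by rewrite add0n; exact: IH.
Qed.

Fixpoint unw (p : nat) (w : seq (Sigma + Gamma)) : seq Sigma * seq nat * seq Gamma :=
  match w with
  | [::] => ([::], [::], [::])
  | inl s :: w' => let: (a, Sc, b) := unw p.+1 w' in (s :: a, Sc, b)
  | inr g :: w' => let: (a, Sc, b) := unw p w' in (a, p :: Sc, g :: b)
  end.

Lemma unw_props w p :
  let: (a, Sc, b) := unw p w in
  [/\ size b = size Sc, (size a + size Sc = size w)%N, size Sc = count isr w,
      sorted leq Sc & all (fun s => p <= s)%N Sc && all (fun s => s <= p + size a)%N Sc].
Proof.
elim: w p => [|[s|g] w IH] p //=.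
- have := IH p.+1; case: (unw p.+1 w) => [[a Sc] b] [h1 h2 h3 h4 /andP[h5 h6]].
  split => //=; first by rewrite addSn h2.
  apply/andP; split.
  + by apply/allP => x /(allP h5) /ltnW.
  + by apply/allP => x /(allP h6); rewrite addSnnS.
- have := IH p; case: (unw p w) => [[a Sc] b] [h1 h2 h3 h4 /andP[h5 h6]].
  split => //=; first by rewrite h1.
  + by rewrite addnS h2.
  + by rewrite h3.
  + by rewrite path_sortedE ?h4 ?h5 //; exact: leq_trans.
  + by rewrite leqnn h5 leq_addr h6.
Qed.

Lemma unw_word w p (pre : seq Sigma) : size pre = p ->
  let: (a, Sc, b) := unw p w in word (pre ++ a) p Sc b = w.
Proof.
elim: w p pre => [|[s|g] w IH] p pre Hp /=.
- by rewrite cats0 drop_oversize // Hp.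
- have := IH p.+1 (rcons pre s); rewrite size_rcons Hp => /(_ erefl).
  have := unw_props w p.+1.
  case: (unw p.+1 w) => [[a Sc] b] [_ _ _ _ /andP[h5 _]]; rewrite cat_rcons => IHw.
  set A := pre ++ s :: a.
  have dp : drop p A = s :: a by rewrite /A drop_size_cat.
  have dp1 : drop p.+1 A = a by rewrite /A drop_cat Hp ltnNge leqnSn /= subSnn /= drop0.
  move: IHw h5; case: Sc => [|x Sc] ; case: b => [|g b] /=;
    rewrite ?dp ?dp1 //= => <- //.
  case/andP => hx _.
  rewrite /segment.
  have tk : take x A = pre ++ s :: take (x - p.+1) a.
    by rewrite /A take_cat Hp ltnNge (ltnW hx) /= -subnSK // subSS.
  by rewrite tk drop_size_cat // drop_cat Hp ltnNge leqnSn /= subSnn /= drop0.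
- have := IH p pre Hp.
  case: (unw p w) => [[a Sc] b] /= <-.
  by rewrite /segment take_cat Hp ltnn subnn take0 cats0 -Hp drop_size.
Qed.

Lemma word_test w : let: (a, Sc, b) := unw 0 w in
  [/\ word a 0 Sc b = w, scheduler a Sc, size b = size Sc,
      (size a + size Sc = size w)%N & size Sc = count isr w].
Proof.
have := unw_props w 0; have := @unw_word w 0 [::] erefl.
case: (unw 0 w) => [[a Sc] b] /= Hw [h1 h2 h3 h4 /andP[h5 h6]].
split => //.
by rewrite /scheduler h4.
Qed.

End Words.
Arguments isr {Sigma Gamma}.
Arguments unw {Sigma Gamma}.

Section Spaces.
Variable C : numClosedFieldType.
Variable n : nat.
Variables (Sigma Gamma : finType).
Variable U : Sigma -> 'M[C]_n.
Variable M : Gamma -> 'M[C]_n.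

Lemma adj_mul (A B : 'M[C]_n) : adj (A *m B) = adj B *m adj A.
Proof. by rewrite /adj map_mxM trmx_mul. Qed.

Lemma adj1 : adj (1%:M : 'M[C]_n) = 1%:M.
Proof. by rewrite /adj map_mx1 trmx1. Qed.

Lemma adj_real (A : 'M[C]_n) : real_mx A -> adj A = A^T.
Proof. by move=> HA; congr trmx; apply/matrixP => i j; rewrite mxE conj_Creal. Qed.

Definition Xop w := adj (Vop U M w) *m Vop U M w.

Lemma Xop_nil : Xop [::] = 1%:M.
Proof. by rewrite /Xop /Vop /= adj1 mulmx1. Qed.

Lemma Xop_cons o w : Xop (o :: w) = adj (Op U M o) *m Xop w *m Op U M o.
Proof. by rewrite /Xop Vop_cons adj_mul !mulmxA. Qed.

Definition Cj (A : 'M[C]_n) : 'M[C]_(n * n) := lin_mulmx (adj A) *m lin_mulmxr A.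

Lemma Cj_vec X A : mxvec X *m Cj A = mxvec (adj A *m X *m A).
Proof. by rewrite /Cj /lin_mulmx /lin_mulmxr mulmxA !mul_vec_lin. Qed.

Fixpoint Sp (t l : nat) : 'M[C]_(n * n) :=
  match t with
  | 0 => <<mxvec (1%:M : 'M[C]_n)>>%MS
  | t'.+1 => (Sp t' l + (\sum_(s : Sigma) (Sp t' l *m Cj (U s))) +
              match l with 0 => 0 | l'.+1 => \sum_(g : Gamma) (Sp t' l' *m Cj (M g)) end)%MS
  end.

Lemma Sp_mono1 t l : (Sp t l <= Sp t.+1 l)%MS.
Proof. by rewrite /= -addsmxA addsmxSl. Qed.

Lemma Sp_mono t1 t2 l : (t1 <= t2)%N -> (Sp t1 l <= Sp t2 l)%MS.
Proof.
move/subnKC <-; elim: (t2 - t1)%N => [|d IH]; first by rewrite addn0.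
by apply: submx_trans IH _; rewrite addnS Sp_mono1.
Qed.

Lemma Sp_monol t l : (Sp t l <= Sp t l.+1)%MS.
Proof.
elim: t l => [|t IH] l //=.
apply: addsmxS; first apply: addsmxS.
- exact: IH.
- by apply: sumsmxS => s _; apply: submxMr; apply: IH.
- case: l => [|l]; first exact: sub0mx.
  by apply: sumsmxS => g _; apply: submxMr; apply: IH.
Qed.

Lemma Sp_words t l (w : seq (Sigma + Gamma)) : (count isr w <= l)%N -> (size w <= t)%N ->
  (mxvec (Xop w) <= Sp t l)%MS.
Proof.
elim: t l w => [|t IH] l [|o w] //= hc hs.
- by rewrite Xop_nil genmxE.
- by apply: submx_trans (Sp_mono1 _ _); rewrite (IH l [::]).
- rewrite Xop_cons -Cj_vec; case: o hc => [s|g] /= hc.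
  + rewrite -addsmxA; apply: submx_trans (addsmxSr _ _); apply: submx_trans (addsmxSl _ _).
    apply: (sumsmx_sup s) => //; apply: submxMr; exact: IH.
  + case: l hc => [|l] // hc.
    rewrite -addsmxA; apply: submx_trans (addsmxSr _ _); apply: submx_trans (addsmxSr _ _).
    apply: (sumsmx_sup g) => //; apply: submxMr; exact: IH.
Qed.

Lemma Sp_ann t l (c : 'M[C]_(n * n, 1)) :
  (forall w : seq (Sigma + Gamma), (count isr w <= l)%N -> (size w <= t)%N -> mxvec (Xop w) *m c = 0) ->
  Sp t l *m c = 0.
Proof.
elim: t l c => [|t IH] l c H; apply/sub_kermxP.
- by rewrite /= genmxE; apply/sub_kermxP; rewrite -Xop_nil; apply: H.
- rewrite /= !addsmx_sub; apply/andP; split; first (apply/andP; split).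
  + apply/sub_kermxP; apply: IH => w hc hs; apply: H => //; exact: leqW.
  + apply/sumsmx_subP => s _; apply/sub_kermxP; rewrite -mulmxA; apply: IH => w hc hs.
    by rewrite mulmxA Cj_vec -[U s]/(Op U M (inl s)) -Xop_cons; apply: H.
  + case: l H => [|l] H; first exact: sub0mx.
    apply/sumsmx_subP => g _; apply/sub_kermxP; rewrite -mulmxA; apply: IH => w hc hs.
    by rewrite mulmxA Cj_vec -[M g]/(Op U M (inr g)) -Xop_cons; apply: H.
Qed.

Lemma Sp_step t l : (Sp t.+1 l <= Sp t l)%MS ->
  (match l with 0 => True | l'.+1 => (Sp t.+1 l' <= Sp t l')%MS end) ->
  (Sp t.+2 l <= Sp t.+1 l)%MS.
Proof.
move=> h1 h2.
rewrite [Sp t.+2 l]/= addsmx_sub; apply/andP; split; first (rewrite addsmx_sub; apply/andP; split).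
- exact: submx_refl.
- apply/sumsmx_subP => s _; apply: submx_trans (submxMr _ h1) _.
  rewrite [Sp t.+1 _]/= -addsmxA; apply: submx_trans (addsmxSr _ _); apply: submx_trans (addsmxSl _ _).
  exact: (sumsmx_sup s).
- case: l h1 h2 => [|l] h1 h2; first exact: sub0mx.
  apply/sumsmx_subP => g _; apply: submx_trans (submxMr _ h2) _.
  rewrite [Sp t.+1 _]/= -addsmxA; apply: submx_trans (addsmxSr _ _); apply: submx_trans (addsmxSr _ _).
  exact: (sumsmx_sup g).
Qed.

End Spaces.

Section Stab.
Variable C : numClosedFieldType.
Variable n : nat.
Variables (Sigma Gamma : finType).
Variable U : Sigma -> 'M[C]_n.
Variable M : Gamma -> 'M[C]_n.

Local Notation Sp := (Sp U M).

Definition stab l tau := forall t, (tau <= t)%N -> (Sp t l <= Sp tau l)%MS.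

Definition lowstab l tau := match l with 0 => True | l'.+1 => stab l' tau end.

Lemma stab_from l tau' tau : (tau' <= tau)%N -> lowstab l tau' ->
  (Sp tau.+1 l <= Sp tau l)%MS -> stab l tau.
Proof.
move=> le hl h0.
have step : forall j, (Sp (tau + j).+1 l <= Sp (tau + j) l)%MS.
  elim => [|j IH]; first by rewrite addn0.
  rewrite addnS; apply: Sp_step => //.
  case: l hl {h0 IH} => [|l] // hl.
  apply: submx_trans (hl _ _) _; first by apply: leq_trans le _; rewrite -addnS leq_addr.
  by apply: Sp_mono; apply: leq_trans le _; rewrite leq_addr.
move=> t /subnKC <-; elim: (t - tau)%N => [|d IH]; first by rewrite addn0.
by apply: submx_trans IH; rewrite addnS.
Qed.

Lemma krylov l tau0 : lowstab l tau0 ->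
  exists i, stab l (tau0 + i) /\ (\rank (Sp tau0 l) + i <= \rank (Sp (tau0 + i) l))%N.
Proof.
move=> hl.
have P : forall j, (exists i, stab l (tau0 + i) /\
     (\rank (Sp tau0 l) + i <= \rank (Sp (tau0 + i) l))%N) \/
   (\rank (Sp tau0 l) + j <= \rank (Sp (tau0 + j) l))%N.
  elim => [|j [IH|IH]]; first by right; rewrite !addn0.
  - by left.
  - case: (boolP (Sp (tau0 + j).+1 l <= Sp (tau0 + j) l)%MS) => hs.
      left; exists j; split => //.
      by apply: stab_from hl hs; rewrite leq_addr.
    right.
    have : (Sp (tau0 + j) l < Sp (tau0 + j).+1 l)%MS by rewrite ltmxE Sp_mono1 hs.
    rewrite ltmxErank => /andP[_ hr].
    by rewrite addnS [(tau0 + j.+1)%N]addnS; apply: leq_ltn_trans IH hr.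
case: (P (n * n).+1) => // h; exfalso.
have := leq_trans h (rank_leq_col _).
by rewrite addnS ltnNge leq_addl.
Qed.

Lemma rank_Sp0 : (0 < n)%N -> (0 < \rank (Sp 0 0))%N.
Proof.
move=> n0; rewrite /= genmxE lt0n mxrank_eq0 mxvec_eq0.
apply/negP => /eqP /matrixP /(_ (Ordinal n0) (Ordinal n0)).
by rewrite !mxE eqxx /= => /eqP; rewrite oner_eq0.
Qed.

Lemma exists_stab l : (0 < n)%N -> exists tau, stab l tau /\ (tau < \rank (Sp tau l))%N.
Proof.
move=> n0; elim: l => [|l [tau' [hs hr]]].
- have [i [hs hr]] := @krylov 0 0 I.
  exists i; split => //; apply: leq_trans hr.
  by rewrite -add1n leq_add2r rank_Sp0.
- have [i [hs2 hr2]] := @krylov l.+1 tau' hs.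
  exists (tau' + i)%N; split => //; apply: leq_trans hr2.
  by rewrite -addSn leq_add2r; apply: leq_trans hr _; apply: mxrankS; apply: Sp_monol.
Qed.

Lemma Sp_stable k m : (0 < n)%N -> (forall t, (\rank (Sp t k) <= m.+1)%N) ->
  forall t, (Sp t k <= Sp m k)%MS.
Proof.
move=> n0 hb t.
have [tau [hs hr]] := exists_stab k n0.
have htm : (tau <= m)%N by rewrite -ltnS; apply: leq_trans hr (hb _).
case: (leqP t m) => htm'; first exact: Sp_mono.
apply: submx_trans (hs t (leq_trans htm (ltnW htm'))) _.
exact: Sp_mono.
Qed.

End Stab.

Section Rank.
Variable C : numClosedFieldType.
Variable n : nat.

Definition Tr : 'M[C]_(n * n) := lin_mx (@trmx C n n).

Lemma Tr_vec X : mxvec X *m Tr = mxvec X^T.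
Proof. exact: mul_vec_lin. Qed.

Definition Sym := kermx (Tr - 1%:M).

Lemma in_Sym m (B : 'M[C]_(m, n * n)) : (B <= Sym)%MS = (B *m Tr == B).
Proof.
apply/sub_kermxP/eqP; rewrite mulmxBr mulmx1; first by move/eqP; rewrite subr_eq0 => /eqP.
by move->; rewrite subrr.
Qed.

Lemma Cj_Tr (A : 'M[C]_n) : real_mx A -> Cj A *m Tr = Tr *m Cj A.
Proof.
move=> hA.
have E : forall u : 'rV[C]_(n * n), u *m Cj A *m Tr = u *m Tr *m Cj A.
  move=> u; rewrite -(vec_mxK u) Cj_vec Tr_vec Tr_vec Cj_vec adj_real //.
  by rewrite !trmx_mul trmxK mulmxA.
apply/row_matrixP => i; rewrite !rowE (mulmxA _ (Cj A)) (mulmxA _ Tr).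
exact: E.
Qed.

Lemma Sym_Cj m (B : 'M[C]_(m, n * n)) A : real_mx A -> (B <= Sym)%MS -> (B *m Cj A <= Sym)%MS.
Proof.
by move=> hA; rewrite !in_Sym => /eqP hB; rewrite -mulmxA Cj_Tr // mulmxA hB.
Qed.

Definition Aset : {set 'I_n * 'I_n} := [set p : 'I_n * 'I_n | (p.1 <= p.2)%N].

Definition Lm : 'M[C]_(n * n, #|Aset|) :=
  \matrix_(r, q) ((r == mxvec_index (enum_val q).1 (enum_val q).2)%:R).

Lemma vec_Lm X q : (mxvec X *m Lm) 0 q = X (enum_val q).1 (enum_val q).2.
Proof.
rewrite mxE (bigD1 (mxvec_index (enum_val q).1 (enum_val q).2)) //= mxE eqxx mulr1 mxvecE.
by rewrite big1 ?addr0 // => r /negbTE hr; rewrite mxE hr mulr0.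
Qed.

Lemma Sym_inj (u : 'rV[C]_(n * n)) : (u <= Sym)%MS -> u *m Lm = 0 -> u = 0.
Proof.
move=> hS h0; rewrite -(vec_mxK u); set X := vec_mx u.
have hX : X^T = X.
  apply: (can_inj mxvecK); rewrite -Tr_vec /X vec_mxK; apply/eqP; by rewrite -in_Sym.
have key : forall i j : 'I_n, (i <= j)%N -> X i j = 0.
  move=> i j hij; have hA : (i, j) \in Aset by rewrite inE.
  have := congr1 (fun v : 'rV_#|Aset| => v 0 (enum_rank_in hA (i, j))) h0.
  by rewrite /= -{1}(vec_mxK u) vec_Lm (enum_rankK_in hA) // => ->; rewrite mxE.
suff X0 : X = 0 by rewrite -/X X0 raddf0.
apply/matrixP => i j; rewrite [RHS]mxE; case: (leqP i j) => hij; first exact: key.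
by rewrite -hX mxE key // ltnW.
Qed.

Lemma Sym_rank (B : 'M[C]_(n * n)) : (B <= Sym)%MS -> (\rank B <= #|Aset|)%N.
Proof.
move=> hB; rewrite -(mxrank_mul_ker B Lm).
have -> : (B :&: kermx Lm)%MS = 0.
  apply/row_matrixP => i; rewrite row0; apply: Sym_inj.
  - by apply: submx_trans (row_sub i _) _; apply: submx_trans (capmxSl _ _) hB.
  - by apply/sub_kermxP; apply: submx_trans (row_sub i _) (capmxSr _ _).
by rewrite mxrank0 addn0 rank_leq_col.
Qed.

Lemma card_Aset : #|Aset| = (n * n.+1)./2.
Proof.
pose Bset : {set 'I_n * 'I_n} := [set p : 'I_n * 'I_n | (p.2 <= p.1)%N].
have hB : #|Bset| = #|Aset|.
  have -> : Bset = (fun p : 'I_n * 'I_n => (p.2, p.1)) @: Aset.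
    apply/setP => p; rewrite inE; apply/idP/imsetP => [hp|[q hq ->]].
      by exists (p.2, p.1); rewrite ?inE //; case: p {hp}.
    by rewrite inE in hq.
  by apply: card_imset => [[a b] [c d]] [-> ->].
have hU : Aset :|: Bset = setT by apply/setP => p; rewrite !inE leq_total.
have hI : Aset :&: Bset = [set (i, i) | i : 'I_n].
  apply/setP => [[i j]]; rewrite !inE /=; apply/andP/imsetP => [[h1 h2]|[k _ [-> ->]]].
    by exists i => //; congr pair; apply/val_inj/eqP; rewrite eqn_leq h1 h2.
  by rewrite leqnn.
have := cardsUI Aset Bset; rewrite hU hI hB cardsT card_prod card_ord card_imset; last first.
  by move=> a b [].
by rewrite addnn card_ord mulnS addnC => ->; rewrite doubleK.
Qed.

End Rank.

Section SpSym.
Variable C : numClosedFieldType.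
Variable n : nat.
Variables (Sigma Gamma : finType).
Variable U : Sigma -> 'M[C]_n.
Variable M : Gamma -> 'M[C]_n.

Lemma Sp_Sym t l : (forall s, real_mx (U s)) -> (forall g, real_mx (M g)) ->
  (Sp U M t l <= Sym C n)%MS.
Proof.
move=> hU hM; elim: t l => [|t IH] l.
- by rewrite /= genmxE in_Sym Tr_vec trmx1.
- rewrite /= addsmx_sub; apply/andP; split; first (rewrite addsmx_sub; apply/andP; split).
  + exact: IH.
  + by apply/sumsmx_subP => s _; apply: Sym_Cj.
  + case: l => [|l]; first exact: sub0mx.
    by apply/sumsmx_subP => g _; apply: Sym_Cj.
Qed.

End SpSym.

Section Main.
Variable C : numClosedFieldType.
Variable n : nat.
Variables (Sigma Gamma : finType).
Variable U : Sigma -> 'M[C]_n.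
Variable M : Gamma -> 'M[C]_n.

Lemma sum_mxvec (F : 'I_(n * n) -> C) :
  \sum_r F r = \sum_i \sum_j F (mxvec_index i j).
Proof.
rewrite pair_big /= (reindex _ (@curry_mxvec_bij n n)) /=.
by apply: eq_bigr => [[i j]] _.
Qed.

Definition cvec (D : 'M[C]_n) : 'M[C]_(n * n, 1) := (mxvec D^T)^T.

Lemma cvecE X D : (mxvec X *m cvec D) 0 0 = \tr (X *m D).
Proof.
rewrite mxE sum_mxvec /mxtrace; apply: eq_bigr => i _; rewrite mxE.
by apply: eq_bigr => j _; rewrite !mxE !mxvecE mxE.
Qed.

Lemma Pr_Xop rho b a S :
  Pr U M rho b a S = \tr (Xop U M (word a 0 S b) *m rho).
Proof.
by rewrite /Pr /Vmat Vaux_word mxtrace_mulC /Xop mulmxA.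
Qed.

Lemma main_k k m : (0 < n)%N -> (forall s, real_mx (U s)) -> (forall g, real_mx (M g)) ->
  ((n * n.+1)./2 - 1 <= m)%N ->
  forall rs rt, qequiv_km U M k m rs rt -> qequiv_k U M k rs rt.
Proof.
move=> n0 hU hM hm rs rt H.
set c := cvec (rs - rt).
have key : forall w : seq (Sigma + Gamma), (count isr w <= k)%N -> (size w <= m)%N ->
    mxvec (Xop U M w) *m c = 0.
  move=> w hc hs; have := word_test w.
  case: (unw 0 w) => [[a S] b] [hV hsch hsz hsize hcnt].
  have := H a S b hsch hsz; rewrite hsize hcnt hc hs => /(_ erefl).
  rewrite !Pr_Xop hV => hP.
  apply/matrixP => i j; rewrite !ord1 cvecE [RHS]mxE mulmxBr linearB /= hP.
  by rewrite subrr.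
have ann : Sp U M m k *m c = 0 by apply: Sp_ann.
have hb : forall t, (\rank (Sp U M t k) <= m.+1)%N.
  move=> t; apply: leq_trans (Sym_rank (Sp_Sym t k hU hM)) _; rewrite card_Aset.
  by move: hm; rewrite leq_subLR add1n.
move=> a S b hsch hsz hk.
set w := word a 0 S b.
have hw : mxvec (Xop U M w) *m c = 0.
  have sub : (mxvec (Xop U M w) <= Sp U M m k)%MS.
    have hcw : (count isr w <= k)%N by apply: leq_trans (count_word a 0 S b) hk.
    apply: submx_trans (Sp_words U M hcw (leqnn (size w))) _.
    exact: Sp_stable.
  by case/submxP: sub => D ->; rewrite -mulmxA ann mulmx0.
rewrite !Pr_Xop -/w; apply/eqP; rewrite -subr_eq0.
have := congr1 (fun A : 'M_1 => A 0 0) hw; rewrite /= cvecE mxE mulmxBr linearB /= => ->.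
by [].
Qed.

End Main.


Unset Implicit Arguments.

Theorem mainTheorem2 (C : numClosedFieldType) (n : nat)
  (Sigma Gamma : finType) (U : Sigma -> 'M[C]_n) (M : Gamma -> 'M[C]_n)
  (rs rt : 'M[C]_n) :
  real_QMM U M -> density rs -> density rt ->
  (forall k : nat,
     qequiv_k U M k rs rt <-> qequiv_km U M k ((n * n.+1)./2 - 1)%N rs rt) /\
  (qequiv U M rs rt <-> qequiv_m U M ((n * n.+1)./2 - 1)%N rs rt).
Proof.
move=> [_ [hU hM]] _ _.
have [n0|n0] := posnP n.
  subst n.
  have all0 : forall P, equiv_restr U M P rs rt.
    by move=> P a S b _ _ _; rewrite /Pr /mxtrace !big_ord0.
  by split; [move=> k; split => _; apply: all0 | split => _; apply: all0].
split.
  move=> k; split => H.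
    by move=> a S b hs hsz /andP[hk _]; apply: H.
  exact: (main_k n0 hU hM (leqnn _) H).
split => H.
  by move=> a S b hs hsz _; apply: H.
move=> a S b hs hsz _.
have H' : qequiv_km U M (size S) ((n * n.+1)./2 - 1)%N rs rt.
  by move=> a' S' b' hs' hsz' /andP[_ ht]; apply: H.
exact: (main_k n0 hU hM (leqnn _) H' hs hsz (leqnn _)).
Qed.
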